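(* Let $N\ge1$ and $0\le m\le r\le n$. Every $L\in\mathcal L^N_{r,m}$ can be written uniquely as $L=\sum_{|J|\le r}p_J\,K_J$ with $p_J\in\mathcal P^N_{r-m}$, and every such sum lies in $\mathcal L^N_{r,m}$; i.e. $\mathcal L^N_{r,m}=\mathcal P^N_{r-m}\otimes\mathcal L^N_{r,r}$. Consequently $$\dim\mathcal L^N_{r,m}=\binom{N+r-m}{r-m}\binom{N+r}{r}.$$
   Context: Variables $x=(x_1,\dots,x_N)$; for a multi-index $I=(i_1,\dots,i_N)\in\mathbb N^N$, $|I|=i_1+\dots+i_N$, $x^I=x_1^{i_1}\cdots x_N^{i_N}$, $D_I=\partial^{|I|}/\partial x_1^{i_1}\cdots\partial x_N^{i_N}$. $\mathcal P^N_s$ is the span of the monomials $x^I$ with $|I|\le s$ (and $\{0\}$ for $s<0$). Euler operator $E=\sum_{i=1}^N x_i\partial/\partial x_i$; Pochhammer operator $(a-E)_k=(-1)^k(E-a)(E-(a-1))\cdots(E-(a-k+1))$. For $|J|\le r$, $K_J=(n-|J|-E)_{r-|J|}D_J$. $\mathcal L^N_{r,m}$ is the real vector space of linear differential operators $\sum_{|I|\le r}a_I(x)D_I$ with polynomial coefficients (order at most $r$) mapping $\mathcal P^N_n$ into $\mathcal P^N_{n-m}$. *)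

(* Defs.v *)
From mathcomp Require Import all_boot all_order all_algebra.
From mathcomp Require Export mpoly.
Set Implicit Arguments. Unset Strict Implicit. Unset Printing Implicit Defensive.
Import Order.TTheory GRing.Theory Num.Theory.
Local Open Scope ring_scope.

Section Defs.
Variables (R : realFieldType) (N : nat).

Definition op := {mpoly R[N]} -> {mpoly R[N]}.

(* p \in P^N_s (s >= 0): total degree of p at most s  (msize = 1 + total degree, 0 for p = 0) *)
Definition inP (s : nat) (p : {mpoly R[N]}) : Prop := (msize p <= s.+1)%N.

Definition Dop (I : 'X_{1..N}) (p : {mpoly R[N]}) : {mpoly R[N]} := mderivm I p.

Definition euler (p : {mpoly R[N]}) : {mpoly R[N]} :=
  \sum_(i < N) 'X_i * mderiv i p.

(* Pochhammer operator (a - E)_k = (a - E)(a - 1 - E) ... (a - k + 1 - E)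
   = (-1)^k (E - a)(E - (a-1)) ... (E - (a-k+1)) *)
Fixpoint poch (a k : nat) (p : {mpoly R[N]}) : {mpoly R[N]} :=
  match k with
  | 0 => p
  | k'.+1 => let q := poch a k' p in (a%:R - k'%:R) *: q - euler q
  end.

Definition Kop (n r : nat) (J : 'X_{1..N < r.+1}) (p : {mpoly R[N]}) : {mpoly R[N]} :=
  poch (n - mdeg J) (r - mdeg J) (Dop J p).

Definition is_diffop (r : nat) (L : op) : Prop :=
  exists a : 'X_{1..N < r.+1} -> {mpoly R[N]},
    forall p, L p = \sum_(I : 'X_{1..N < r.+1}) a I * Dop I p.

Definition Lrm (n r m : nat) (L : op) : Prop :=
  is_diffop r L /\ forall p, inP n p -> inP (n - m) (L p).

Definition has_dim (S : op -> Prop) (d : nat) : Prop :=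
  exists b : 'I_d -> op,
    (forall c : 'I_d -> R, S (fun p => \sum_(i < d) c i *: b i p)) /\
    (forall L, S L -> exists! c : 'I_d -> R,
        forall p, L p = \sum_(i < d) c i *: b i p).

End Defs.

(* Main.v *)
Require Import Defs.
From mathcomp Require Import all_boot all_order all_algebra.
From mathcomp Require Import mpoly.
From Stdlib Require Import FunctionalExtensionality.
From mathcomp Require Import ring lra zify.
Set Implicit Arguments. Unset Strict Implicit. Unset Printing Implicit Defensive.
Import Order.TTheory GRing.Theory Num.Theory.
Local Open Scope ring_scope.



Section Basics.
Variables (R : realFieldType) (N : nat).
Local Notation mp := {mpoly R[N]}.
Implicit Types (p q : mp).

Lemma eulerD p q : euler (p + q) = euler p + euler q.
Proof. by rewrite /euler -big_split; apply: eq_bigr => i _; rewrite mderivD mulrDr. Qed.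

Lemma eulerZ c p : euler (c *: p) = c *: euler p.
Proof. by rewrite /euler scaler_sumr; apply: eq_bigr => i _; rewrite mderivZ scalerAr. Qed.

Lemma euler0 : euler (0 : mp) = 0.
Proof. by rewrite /euler big1 // => i _; rewrite mderiv0 mulr0. Qed.

Lemma pochD a k p q : poch a k (p + q) = poch a k p + poch a k q.
Proof.
elim: k => [//|k IH] /=; by rewrite IH eulerD scalerDr opprD addrACA.
Qed.

Lemma pochZ a k c p : poch a k (c *: p) = c *: poch a k p.
Proof.
elim: k => [//|k IH] /=; by rewrite IH eulerZ scalerBr !scalerA mulrC.
Qed.

Lemma poch0 a k : poch a k (0 : mp) = 0.
Proof. by elim: k => [|k IH] /=; rewrite ?IH ?euler0 ?scaler0 ?subr0. Qed.

Lemma KopD n r (J : 'X_{1..N < r.+1}) p q : Kop n J (p + q) = Kop n J p + Kop n J q.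
Proof. by rewrite /Kop /Dop mderivmD pochD. Qed.

Lemma KopZ n r (J : 'X_{1..N < r.+1}) c p : Kop n J (c *: p) = c *: Kop n J p.
Proof. by rewrite /Kop /Dop mderivmZ pochZ. Qed.

Lemma mnm_subnn (M : 'X_{1..N}) : (M - M)%MM = 0%MM.
Proof. by apply/mnmP => i; rewrite mnmBE mnm0E subnn. Qed.

Lemma eulerX (M : 'X_{1..N}) : euler 'X_[M] = (mdeg M)%:R *: ('X_[M] : mp).
Proof.
rewrite /euler mdegE natr_sum scaler_suml; apply: eq_bigr => i _.
rewrite mderivX -scalerAr; case: (eqVneq (M i) 0%N) => [->|nz]; first by rewrite !scale0r.
by rewrite -mpolyXD addmC submK // lep1mP.
Qed.

Lemma poch_eigen a k (d : R) p : euler p = d *: p ->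
  poch a k p = (\prod_(j < k) (a%:R - j%:R - d)) *: p.
Proof.
move=> He; elim: k => [|k IH] /=; first by rewrite big_ord0 scale1r.
rewrite IH eulerZ He big_ord_recr /= scalerA scalerA -scalerBl; congr (_ *: _).
by ring.
Qed.

Definition ffp (J K : 'X_{1..N}) : nat := (\prod_(i < N) (K i)^_(J i))%N.

Definition kap n r (J : 'X_{1..N < r.+1}) (K : 'X_{1..N}) : R :=
  (\prod_(j < r - mdeg J) ((n - mdeg J)%:R - j%:R - (mdeg (K - J))%:R)) * (ffp J K)%:R.

Lemma Dop_X (J K : 'X_{1..N}) : Dop J ('X_[K] : mp) = (ffp J K)%:R *: 'X_[K - J].
Proof. by rewrite /Dop mderivmX. Qed.

Lemma Kop_X n r (J : 'X_{1..N < r.+1}) (K : 'X_{1..N}) :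
  Kop n J ('X_[K] : mp) = kap n J K *: 'X_[K - J].
Proof.
rewrite /Kop Dop_X pochZ (@poch_eigen _ _ (mdeg (K - J))%:R) ?eulerX //.
by rewrite scalerA mulrC.
Qed.

Lemma ffp_eq0 (J K : 'X_{1..N}) : ~~ (J <= K)%MM -> ffp J K = 0%N.
Proof.
move=> h; move: h; rewrite /lem negb_forall => /existsP [i hi].
by rewrite /ffp (bigD1 i) //= ffact_small ?mul0n // ltnNge.
Qed.

Lemma ffp_neq0 (J K : 'X_{1..N}) : (J <= K)%MM -> ffp J K != 0%N.
Proof.
move/mnm_lepP => h; rewrite -lt0n /ffp prodn_gt0 // => i; by rewrite ffact_gt0.
Qed.

Lemma lem_mdeg_eq (J K : 'X_{1..N}) : (J <= K)%MM -> mdeg J = mdeg K -> J = K.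
Proof.
move=> le e; have h := submK le.
have d : mdeg K = (mdeg (K - J) + mdeg J)%N by rewrite -mdegD h.
have /eqP : mdeg (K - J) = 0%N by lia.
by rewrite mdeg_eq0 => /eqP z; rewrite -h z add0m.
Qed.

Lemma mdegB_le (J K : 'X_{1..N}) : (J <= K)%MM -> mdeg (K - J) = (mdeg K - mdeg J)%N.
Proof. by move=> le; rewrite -{2}(submK le) mdegD addnK. Qed.

Lemma lem_mdeg (J K : 'X_{1..N}) : (J <= K)%MM -> (mdeg J <= mdeg K)%N.
Proof. by move=> le; rewrite -(submK le) mdegD leq_addl. Qed.

End Basics.



Section Tri.
Variables (R : realFieldType) (N : nat).
Local Notation mp := {mpoly R[N]}.

Lemma tri_zero r (b : 'X_{1..N < r.+1} -> mp) (c : 'X_{1..N < r.+1} -> 'X_{1..N} -> R) :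
  (forall K : 'X_{1..N < r.+1}, \sum_J b J * (c J K *: 'X_[K - J]) = 0) ->
  (forall (J : 'X_{1..N < r.+1}) K, ~~ (val J <= K)%MM -> c J K = 0) ->
  (forall K : 'X_{1..N < r.+1}, c K K != 0) -> forall J, b J = 0.
Proof.
move=> H c0 cK.
suff h : forall t (J : 'X_{1..N < r.+1}), (mdeg J < t)%N -> b J = 0.
  by move=> J; apply: (h (mdeg J).+1).
elim=> [//|t IH] J; rewrite ltnS leq_eqVlt => /orP [/eqP dJ|]; last exact: IH.
have := H J; rewrite (bigD1 J) //= big1 => [|K nKJ].
- rewrite addr0 mnm_subnn mpolyX0 -scalerAr mulr1 => /eqP.
  by rewrite scaler_eq0 (negbTE (cK J)) /= => /eqP.
- case: (boolP (mdeg K < t)%N) => [lt|]; first by rewrite IH // mul0r.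
  rewrite -leqNgt -dJ => ge; rewrite c0 ?scale0r ?mulr0 //; apply/negP => le.
  move/eqP: nKJ; apply; apply/val_inj/lem_mdeg_eq => //.
  by apply/anti_leq; rewrite ge lem_mdeg.
Qed.


Definition DO (s : nat) (T : op R N) := exists l : seq ('X_{1..N} * mp),
  all (fun x => (mdeg x.1 <= s)%N) l /\ forall q, T q = \sum_(x <- l) x.2 * Dop x.1 q.

Lemma DO_ext s (T T' : op R N) : (forall q, T q = T' q) -> DO s T -> DO s T'.
Proof. by move=> e [l [h1 h2]]; exists l; split => // q; rewrite -e. Qed.

Lemma DO_mono s s' T : (s <= s')%N -> DO s T -> DO s' T.
Proof.
move=> le [l [h1 h2]]; exists l; split => //.
by apply/allP => x /(allP h1) /= h; apply: leq_trans le.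
Qed.

Lemma DO_Dop s J : (mdeg J <= s)%N -> DO s (Dop J).
Proof. by move=> h; exists [:: (J, 1)]; rewrite /= h; split => // q; rewrite big_seq1 mul1r. Qed.

Lemma DO_zero s : DO s (fun _ => 0).
Proof. by exists [::]; split => // q; rewrite big_nil. Qed.

Lemma DO_add s T1 T2 : DO s T1 -> DO s T2 -> DO s (fun q => T1 q + T2 q).
Proof.
move=> [l1 [a1 b1]] [l2 [a2 b2]]; exists (l1 ++ l2); rewrite all_cat a1 a2; split => // q.
by rewrite big_cat b1 b2.
Qed.

Lemma DO_mul s a T : DO s T -> DO s (fun q => a * T q).
Proof.
move=> [l [h1 h2]]; exists [seq (x.1, a * x.2) | x <- l]; split.
  by rewrite all_map; apply/allP => x /(allP h1).
by move=> q; rewrite big_map h2 mulr_sumr; apply: eq_bigr => x _; rewrite mulrA.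
Qed.

Lemma DO_sum s (I : eqType) (l : seq I) (T : I -> op R N) :
  (forall i, i \in l -> DO s (T i)) -> DO s (fun q => \sum_(i <- l) T i q).
Proof.
elim: l => [|i l IH] h; first by apply: DO_ext (DO_zero s) => q; rewrite big_nil.
apply: DO_ext (DO_add (h i (mem_head _ _)) (IH _)) => [q|]; first by rewrite big_cons.
by move=> j jl; apply: h; rewrite in_cons jl orbT.
Qed.

Lemma DO_deriv s i T : DO s T -> DO s.+1 (fun q => mderiv i (T q)).
Proof.
move=> [l [h1 h2]].
apply: (@DO_ext _ (fun q => \sum_(x <- l) (mderiv i x.2 * Dop x.1 q + x.2 * Dop (x.1 + U_(i))%MM q))).
  move=> q; rewrite h2 raddf_sum /=; apply: eq_bigr => x _.
  by rewrite mderivM /Dop mderivmDm mderivmU1m.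
apply: DO_sum => x xl; apply: DO_add; apply: DO_mul; apply: DO_Dop.
  by apply: leqW; apply: (allP h1).
by rewrite mdegD mdeg1 addn1 ltnS; apply: (allP h1).
Qed.

Lemma DO_euler s T : DO s T -> DO s.+1 (fun q => euler (T q)).
Proof.
move=> h; rewrite /euler; apply: DO_sum => i _; apply: DO_mul; exact: DO_deriv.
Qed.

Lemma DO_poch (J : 'X_{1..N}) a k : DO (mdeg J + k) (fun q => poch a k (Dop J q)).
Proof.
elim: k => [|k IH] /=; first by rewrite addn0; apply: DO_Dop.
apply: (@DO_ext _ (fun q => ((a%:R - k%:R)%:MP * poch a k (Dop J q)) +
   (-1)%:MP * euler (poch a k (Dop J q)))).
  by move=> q; rewrite !mul_mpolyC scaleN1r.
rewrite addnS; apply: DO_add; apply: DO_mul; last exact: DO_euler.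
by apply: DO_mono IH.
Qed.

Lemma DO_Kop n r (J : 'X_{1..N < r.+1}) : DO r (Kop n J).
Proof.
have := DO_poch J (n - mdeg J) (r - mdeg J); rewrite subnKC; last by have := bmdeg J.
by apply: DO_ext => q.
Qed.

Lemma DO_diffop r T : DO r T -> is_diffop r T.
Proof.
move=> [l [h1 h2]].
exists (fun I : 'X_{1..N < r.+1} => \sum_(x <- l | x.1 == val I) x.2) => q.
rewrite h2; apply/esym; under eq_bigr do rewrite mulr_suml.
under eq_bigr do rewrite big_mkcond.
rewrite exchange_big /= big_seq [RHS]big_seq; apply: eq_bigr => x xl.
have dx : (mdeg x.1 < r.+1)%N by rewrite ltnS; apply: (allP h1).
rewrite (bigD1 (BMultinom dx)) //= eqxx big1 ?addr0 // => I nI.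
case: eqP => // e; case/eqP: nI; apply/val_inj => /=; by rewrite e.
Qed.

End Tri.



Section Exist.
Variables (R : realFieldType) (N n r : nat).
Hypothesis (rn : (r <= n)%N).
Local Notation mp := {mpoly R[N]}.
Local Notation BM := 'X_{1..N < r.+1}.

Definition Mop (p : BM -> mp) (q : mp) : mp := \sum_(J : BM) p J * Kop n J q.

Lemma kap_eq0 (J : BM) K : ~~ (val J <= K)%MM -> kap R n J K = 0.
Proof. by move=> h; rewrite /kap ffp_eq0 // mulr0. Qed.

Lemma kap_diag (J : BM) : kap R n J J != 0.
Proof.
have dJ : (mdeg J <= r)%N by have := bmdeg J.
rewrite /kap mulf_neq0 //; last by rewrite pnatr_eq0 ffp_neq0 // lepm_refl.
rewrite prodf_seq_neq0; apply/allP => j _ /=.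
rewrite mnm_subnn mdeg0 subr0 -natrB; last by have := ltn_ord j; lia.
by rewrite pnatr_eq0; have := ltn_ord j; lia.
Qed.

Lemma DO_Mop p : DO r (Mop p).
Proof. by apply: DO_sum => J _; apply: DO_mul; apply: DO_Kop. Qed.

Lemma Mop_inj (p p' : BM -> mp) : (forall q, Mop p q = Mop p' q) -> forall J, p J = p' J.
Proof.
move=> e J; apply/eqP; rewrite -subr_eq0; apply/eqP; move: J.
apply: (@tri_zero _ _ _ (fun J => p J - p' J) (@kap R N n r)); last 2 first.
- exact: kap_eq0.
- exact: kap_diag.
move=> K; transitivity (Mop p 'X_[K] - Mop p' 'X_[K]); last by rewrite e subrr.
by rewrite /Mop -sumrB; apply: eq_bigr => J _; rewrite mulrBl Kop_X.
Qed.

Lemma Mop_exists (L : op R N) : is_diffop r L -> exists p, forall q, L q = Mop p q.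
Proof.
move=> HL.
have stepA : forall t, exists p, forall K : BM, (mdeg K < t)%N -> L 'X_[K] = Mop p 'X_[K].
  elim=> [|t [p Hp]]; first by exists (fun _ => 0).
  exists (fun J => p J + (if mdeg J == t then (kap R n J J)^-1 *: (L 'X_[J] - Mop p 'X_[J]) else 0)).
  move=> K; rewrite ltnS leq_eqVlt => /orP [/eqP dK | lt]; rewrite /Mop;
    under eq_bigr do rewrite mulrDl; rewrite big_split /=.
  - rewrite [X in _ + X](bigD1 K) //= dK eqxx Kop_X mnm_subnn mpolyX0 -scalerAr mulr1 scalerA.
    rewrite mulfV ?kap_diag // scale1r [X in _ + (_ + X)]big1 ?addr0.
      by rewrite addrC subrK.
    move=> J nJ; case: eqP => [dJ|]; last by rewrite mul0r.
    rewrite Kop_X (@kap_eq0 J K) ?scale0r ?mulr0 //; apply/negP => le.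
    by case/eqP: nJ; apply/val_inj/lem_mdeg_eq => //; rewrite dJ dK.
  - rewrite [X in _ + X]big1 ?addr0; first exact: Hp.
    move=> J _; case: eqP => [dJ|]; last by rewrite mul0r.
    rewrite Kop_X (@kap_eq0 J K) ?scale0r ?mulr0 //; apply/negP => /lem_mdeg h; have : (mdeg J <= mdeg K)%N := h; lia.
have [p Hp] := stepA r.+1; exists p.
have [a Ha] := HL; have [b Hb] := DO_diffop (DO_Mop p).
have ab : forall I, a I - b I = 0.
  apply: (@tri_zero _ _ _ (fun I => a I - b I) (fun I K => (ffp I K)%:R)); last 2 first.
  - by move=> J K h; rewrite ffp_eq0.
  - by move=> K; rewrite pnatr_eq0 ffp_neq0 // lepm_refl.
  move=> K; transitivity (L 'X_[K] - Mop p 'X_[K]); last by rewrite Hp ?bmdeg // subrr.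
  by rewrite Ha Hb -sumrB; apply: eq_bigr => J _; rewrite mulrBl Dop_X.
move=> q; rewrite Ha Hb; apply: eq_bigr => I _; have := ab I.
by move/eqP; rewrite subr_eq0 => /eqP ->.
Qed.

End Exist.



Section Deg.
Variables (R : realFieldType) (N : nat).
Local Notation mp := {mpoly R[N]}.

Lemma inP_supp s (p : mp) : inP s p <-> (forall B, B \in msupp p -> (mdeg B <= s)%N).
Proof.
split => [h B /msize_mdeg_lt|h]; first by move=> lt; rewrite -ltnS; apply: leq_trans lt h.
rewrite /inP msizeE; apply/bigmax_leqP_seq => B Bs _; by rewrite ltnS h.
Qed.

Lemma mcoeffMX' (p : mp) (M T : 'X_{1..N}) :
  (p * 'X_[M])@_T = if (M <= T)%MM then p@_(T - M) else 0.
Proof.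
case: ifP => [le|nle]; first by rewrite -{1}(submK le) addmC mcoeffMX.
apply: memN_msupp_eq0; rewrite (perm_mem (msuppMX _ _)); apply/negP => /mapP [m' _ e].
by move: nle; rewrite e lem_addr.
Qed.

Lemma mnm_le_mdeg (M : 'X_{1..N}) i : (M i <= mdeg M)%N.
Proof. by rewrite mdegE (bigD1 i) //= leq_addr. Qed.

Lemma mdegUn (i : 'I_N) k : mdeg (U_(i) *+ k)%MM = k.
Proof. by rewrite mdegMn mdeg1 mul1n. Qed.

Variables (n r : nat).
Local Notation BM := 'X_{1..N < r.+1}.

Lemma deg_bound (m : nat) (p : BM -> mp) : (1 <= N)%N -> (m <= r)%N -> (r <= n)%N ->
  (forall q, inP n q -> inP (n - m) (Mop n p q)) -> forall J, inP (r - m) (p J).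
Proof.
move=> N1 mr rn Hb.
pose good (J : BM) := has (fun B => (r - m < mdeg B)%N) (msupp (p J)).
suff ng : forall J, ~~ good J.
  move=> J; apply/inP_supp => B Bs; rewrite leqNgt; apply/negP => lt.
  by move/negP: (ng J); apply; apply/hasP; exists B.
move=> J1; apply/negP => gJ1.
pose i0 : 'I_N := Ordinal N1.
pose w (J : BM) := (r.+1 * mdeg J + J i0)%N.
case: (@arg_maxnP _ J1 good w gJ1) => J0 gJ0 maxJ0.
have [B0 B0s B0d] := hasP gJ0.
have dJ0 : (mdeg J0 <= r)%N by have := bmdeg J0.
set s := mdeg J0 in dJ0.
pose X := (U_(i0) *+ (n - r))%MM.
pose I := (J0 + X)%MM. pose T := (B0 + X)%MM.
have dI : mdeg I = (s + (n - r))%N by rewrite mdegD mdegUn.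
have dT : mdeg T = (mdeg B0 + (n - r))%N by rewrite mdegD mdegUn.
have inPI : inP n ('X_[I] : mp) by rewrite /inP msizeX ltnS dI; lia.
have := Hb _ inPI; move/inP_supp => /(_ T) Hdeg.
suff nz : (Mop n p 'X_[I])@_T != 0.
  by have := Hdeg; rewrite mcoeff_msupp nz => /(_ isT); rewrite dT; lia.
have IJ0 : (I - J0)%MM = X by rewrite /I addmC addmK.
rewrite /Mop raddf_sum (bigD1 J0) //= big1 ?addr0.
  rewrite Kop_X -scalerAr mcoeffZ mcoeffMX' IJ0 /T lem_addl addmK.
  rewrite mulf_neq0 // -?mcoeff_msupp //.
  rewrite /kap mulf_neq0 //; last by rewrite pnatr_eq0 ffp_neq0 // /I lem_addr.
  rewrite prodf_seq_neq0; apply/allP => j _ /=.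
  have e : (n - s = r - s - j + j + mdeg (I - J0))%N by rewrite IJ0 mdegUn; have := ltn_ord j; lia.
  rewrite /s e !natrD.
  have -> : forall a b c : R, a + b + c - b - c = a by move=> *; ring.
  by rewrite pnatr_eq0; have := ltn_ord j; lia.
move=> J nJ; rewrite Kop_X -scalerAr mcoeffZ.
case: (boolP (val J <= I)%MM) => leJI; last by rewrite (@kap_eq0 _ _ n r J I) ?mul0r.
have dJ : (mdeg J <= r)%N by have := bmdeg J.
have dIJ : mdeg (I - J) = (mdeg I - mdeg J)%N by rewrite mdegB_le.
case: (ltnP (mdeg J) s) => [ltJ | geJ].
  have jr : (r - s < r - mdeg J)%N by lia.
  rewrite /kap (bigD1 (Ordinal jr)) //= -!mulrA.
  have e : (n - mdeg J = r - s + mdeg (I - J))%N by rewrite dIJ dI; lia.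
  rewrite e natrD.
  have -> : forall a b : R, a + b - a - b = 0 by move=> *; ring.
  by rewrite mul0r.
rewrite mcoeffMX'; case: ifP => [leT|]; last by rewrite mulr0.
case: (eqVneq (p J)@_(T - (I - J)) 0) => [->|nzc]; first by rewrite mulr0.
exfalso; have gJ : good J.
  apply/hasP; exists (T - (I - J))%MM; first by rewrite mcoeff_msupp.
  by rewrite mdegB_le // dT dIJ dI; lia.
have := maxJ0 J gJ; rewrite /w => hw.
have Ji0 : (J0 i0 <= s)%N by apply: mnm_le_mdeg.
have eJ : mdeg J = s.
  apply/eqP; rewrite eqn_leq geJ andbT; apply/negP => /negP; rewrite -ltnNge => gt.
  have : (r.+1 * s.+1 <= r.+1 * mdeg J)%N by rewrite leq_mul2l.
  by rewrite /s in Ji0 gt *; nia.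
move/eqP: nJ; apply; apply/val_inj/lem_mdeg_eq; last by rewrite eJ.
apply/mnm_lepP => i; move/mnm_lepP: leJI => /(_ i).
rewrite /I mnmDE /X mulmnE mnm1E.
case: (eqVneq i0 i) => [<-|ne]; last by move=> h; rewrite /= mul0n addn0 in h.
move=> _; have h : (J i0 <= J0 i0)%N.
  move: hw; rewrite eJ /s => hw; have hw2 : (r.+1 * mdeg J0 + J i0 <= r.+1 * mdeg J0 + J0 i0)%N := hw.
  by rewrite leq_add2l in hw2.
exact: h.
Qed.

End Deg.



Section Card.
Variables (N k : nat).

Definition gdrop (M : 'X_{1..N.+1}) : 'X_{1..N} := [multinom M (lift ord_max i) | i < N].

Lemma mdeg_split (M : 'X_{1..N.+1}) : mdeg M = (mdeg (gdrop M) + M ord_max)%N.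
Proof.
rewrite !mdegE big_ord_recr /=; congr (_ + _)%N; apply: eq_bigr => i _.
rewrite mnmE; congr (M _); apply/val_inj => /=; by rewrite /bump leqNgt ltn_ord.
Qed.

Definition gext (x : 'X_{1..N}) : 'X_{1..N.+1} :=
  [multinom (if unlift ord_max i is Some j then x j else (k - mdeg x)%N) | i < N.+1].

Lemma gdrop_ext x : gdrop (gext x) = x.
Proof. by apply/mnmP => i; rewrite mnmE mnmE liftK. Qed.

Lemma mdeg_ext x : (mdeg x <= k)%N -> mdeg (gext x) = k.
Proof. by move=> h; rewrite mdeg_split gdrop_ext mnmE unlift_none; lia. Qed.

Lemma card_bmnm : #|{: 'X_{1..N < k.+1}}| = 'C(N + k, k).
Proof.
pose S := [seq s2m t | t : k.-tuple 'I_N.+1 <- enum (basis N.+1 k)].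
have e : perm_eq (map val (enum {: 'X_{1..N < k.+1}})) (map gdrop S).
  apply: uniq_perm.
  - by rewrite map_inj_uniq ?enum_uniq //; exact: val_inj.
  - rewrite map_inj_in_uniq ?uniq_basis // => M1 M2 M1S M2S eg.
    have d1 : mdeg M1 = k by apply/eqP; rewrite basis_cover.
    have d2 : mdeg M2 = k by apply/eqP; rewrite basis_cover.
    apply/mnmP => i; case: (unliftP ord_max i) => [j -> | ->].
      by have := congr1 (fun M : 'X_{1..N} => M j) eg; rewrite /gdrop !mnmE.
    move: d1 d2; rewrite !mdeg_split eg; lia.
  - move=> x; apply/idP/idP.
    + case/mapP => y _ ->; have := bmdeg y; rewrite ltnS => dy.
      apply/mapP; exists (gext (val y)); last by rewrite gdrop_ext.
      by rewrite -basis_cover mdeg_ext.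
    + case/mapP => M MS ->; have : mdeg M = k by apply/eqP; rewrite basis_cover.
      rewrite mdeg_split => dM; have h : (mdeg (gdrop M) < k.+1)%N by lia.
      by apply/mapP; exists (BMultinom h); rewrite ?mem_enum.
by rewrite cardE -(size_map val) (perm_size e) size_map size_basis addnC.
Qed.

End Card.



Section Fin.
Variables (R : realFieldType) (N : nat).
Local Notation mp := {mpoly R[N]}.

Lemma inP0 s : inP s (0 : mp).
Proof. by rewrite /inP msize0. Qed.

Lemma inPD s (p q : mp) : inP s p -> inP s q -> inP s (p + q).
Proof. by rewrite /inP => hp hq; apply: leq_trans (msizeD_le _ _) _; rewrite geq_max hp hq. Qed.

Lemma inP_sum s (I : Type) (l : seq I) (F : I -> mp) :
  (forall i, inP s (F i)) -> inP s (\sum_(i <- l) F i).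
Proof. by move=> h; elim/big_ind: _ => //; [exact: inP0 | exact: inPD]. Qed.

Lemma inPZ s c (p : mp) : inP s p -> inP s (c *: p).
Proof. by rewrite /inP => h; apply: leq_trans (mmeasureZ_le _ _ _) h. Qed.

Lemma inPX s (M : 'X_{1..N}) : (mdeg M <= s)%N -> inP s ('X_[M] : mp).
Proof. by rewrite /inP msizeX ltnS. Qed.

Lemma inPM s t (p q : mp) : inP s p -> inP t q -> inP (s + t) (p * q).
Proof.
move=> /inP_supp hp /inP_supp hq; apply/inP_supp => B /msuppM_le /allpairsP [[m1 m2] [/= h1 h2 ->]].
by rewrite mdegD leq_add // ?hp ?hq.
Qed.

Lemma Kop0 n r (J : 'X_{1..N < r.+1}) : Kop n J (0 : mp) = 0.
Proof. by rewrite /Kop /Dop raddf0 poch0. Qed.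

Lemma Kop_sum n r (J : 'X_{1..N < r.+1}) (I : Type) (l : seq I) (F : I -> mp) :
  Kop n J (\sum_(i <- l) F i) = \sum_(i <- l) Kop n J (F i).
Proof. by apply: (big_morph _ (KopD n J) (Kop0 n J)). Qed.

Lemma Kop_deg n r (J : 'X_{1..N < r.+1}) (q : mp) : (r <= n)%N -> inP n q -> inP (n - r) (Kop n J q).
Proof.
move=> rn hq; rewrite (mpolywE hq) Kop_sum; apply: inP_sum => M; rewrite KopZ; apply: inPZ.
rewrite Kop_X; case: (eqVneq (kap R n J M) 0) => [->|nz]; first by rewrite scale0r; apply: inP0.
apply: inPZ; apply: inPX; rewrite leqNgt; apply/negP => gt; move/eqP: nz; apply.
case: (boolP (val J <= val M)%MM) => le; last by rewrite /kap ffp_eq0 // mulr0.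
have dM : (mdeg M <= n)%N by have := bmdeg M.
have dJ : (mdeg J <= r)%N by have := bmdeg J.
have dMJ : mdeg (M - J)%MM = (mdeg M - mdeg J)%N := mdegB_le le.
have jr : (n - mdeg M < r - mdeg J)%N by lia.
rewrite /kap (bigD1 (Ordinal jr)) //= -!mulrA.
have e : (n - mdeg J = n - mdeg M + mdeg (M - J)%MM)%N by lia.
rewrite e natrD.
have -> : forall a b : R, a + b - a - b = 0 by move=> *; ring.
by rewrite mul0r.
Qed.

Lemma Lrm_ext n r m (L L' : op R N) : (forall q, L q = L' q) -> Lrm n r m L -> Lrm n r m L'.
Proof.
move=> e [[a Ha] Hb]; split; first by exists a => q; rewrite -e.
by move=> q hq; rewrite -e; apply: Hb.
Qed.

Lemma part2 n r m (p : 'X_{1..N < r.+1} -> mp) : (m <= r)%N -> (r <= n)%N ->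
  (forall J, inP (r - m) (p J)) ->
  Lrm n r m (fun q => \sum_(J : 'X_{1..N < r.+1}) p J * Kop n J q).
Proof.
move=> mr rn hp; split; first exact: (DO_diffop (DO_Mop n p)).
move=> q hq; apply: inP_sum => J.
have -> : (n - m = (r - m) + (n - r))%N by lia.
by apply: inPM => //; apply: Kop_deg.
Qed.

End Fin.



Theorem mainTheorem19 (R : realFieldType) (N n r m : nat) :
  (1 <= N)%N -> (m <= r)%N -> (r <= n)%N ->
  (forall L : op R N, Lrm n r m L ->
     exists! p : 'X_{1..N < r.+1} -> {mpoly R[N]},
       (forall J, inP (r - m) (p J)) /\
       (forall q, L q = \sum_(J : 'X_{1..N < r.+1}) p J * Kop n J q)) /\
  (forall p : 'X_{1..N < r.+1} -> {mpoly R[N]},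
     (forall J, inP (r - m) (p J)) ->
     Lrm n r m (fun q => \sum_(J : 'X_{1..N < r.+1}) p J * Kop n J q)) /\
  has_dim (Lrm (N := N) (R := R) n r m) ('C(N + r - m, r - m) * 'C(N + r, r))%N.
Proof.
move=> N1 mr rn.
have part1 : forall L : op R N, Lrm n r m L ->
     exists! p : 'X_{1..N < r.+1} -> {mpoly R[N]},
       (forall J, inP (r - m) (p J)) /\
       (forall q, L q = \sum_(J : 'X_{1..N < r.+1}) p J * Kop n J q).
  move=> L [HL Hb]; have [p Hp] := Mop_exists rn HL.
  exists p; split.
    split => //; apply: (@deg_bound R N n r m p) => // q hq; rewrite -Hp; exact: Hb.
  move=> p' [_ Hp']; apply: functional_extensionality => J.
  by apply: (Mop_inj rn) => q; rewrite -Hp.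
split => //; split; first by move=> p hp; apply: part2.
pose T := ('X_{1..N < (r - m).+1} * 'X_{1..N < r.+1})%type.
have cardT : ('C(N + r - m, r - m) * 'C(N + r, r))%N = #|{: T}|.
  by rewrite card_prod !card_bmnm addnBA.
rewrite cardT.
pose b (i : 'I_#|{: T}|) : op R N := fun q => 'X_[(enum_val i).1] * Kop n (enum_val i).2 q.
pose pc (c : 'I_#|{: T}| -> R) (J : 'X_{1..N < r.+1}) : {mpoly R[N]} :=
  \sum_(B : 'X_{1..N < (r - m).+1}) c (enum_rank (B, J)) *: 'X_[B].
have key : forall c q, \sum_(i < #|{: T}|) c i *: b i q = \sum_J pc c J * Kop n J q.
  move=> c q; rewrite (reindex (@enum_rank T)) /=; last first.
    by exists enum_val => x _; rewrite ?enum_rankK ?enum_valK.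
  under eq_bigr do rewrite /b enum_rankK.
  transitivity (\sum_(B : 'X_{1..N < (r - m).+1}) \sum_(J : 'X_{1..N < r.+1})
      c (enum_rank (B, J)) *: ('X_[B] * Kop n J q)).
    by rewrite pair_big /=; apply: eq_big => // -[B J].
  rewrite exchange_big /=; apply: eq_bigr => J _; rewrite /pc mulr_suml.
  by apply: eq_bigr => B _; rewrite scalerAl.
have pcdeg : forall c J, inP (r - m) (pc c J).
  move=> c J; apply: inP_sum => B; apply: inPZ; apply: inPX; by have := bmdeg B.
exists b; split.
  move=> c; apply: (Lrm_ext (L := fun q => \sum_J pc c J * Kop n J q)).
    by move=> q; rewrite key.
  by apply: part2.
move=> L HL; have [p [[pd Hp] pu]] := part1 L HL.
exists (fun i : 'I_#|{: T}| => (p (enum_val i).2)@_(enum_val i).1); split.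
  move=> q; rewrite key Hp; apply: eq_bigr => J _; congr (_ * _).
  rewrite /pc (mpolywE (pd J)); apply: eq_bigr => B _; by rewrite enum_rankK.
move=> c' Hc'.
have -> : p = pc c'.
  apply: pu; split => // q; by rewrite Hc' key.
apply: functional_extensionality => i; rewrite /pc raddf_sum /=.
rewrite (bigD1 (enum_val i).1) //= mcoeffZ mcoeffX eqxx mulr1 big1 ?addr0.
  by rewrite -surjective_pairing enum_valK.
move=> B nB; rewrite mcoeffZ mcoeffX.
by case: eqP => [e|]; rewrite ?mulr0 //; case/eqP: nB; apply/val_inj.
Qed.
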